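(* Let $G$ be a finite simple graph on $[d]$ and let ${\bf x}_f,{\bf x}_g$ be monomials of $R[G]$ (associated with $k$-colorings $f,g$ of graphs $G_{\bf a}$, ${\bf a}\in\mathbb{Z}^d_{\ge0}$) such that ${\bf x}_f-{\bf x}_g\in I_G$. Then the following are equivalent: (i) ${\bf x}_f-{\bf x}_g\in M_G$; (ii) both ${\bf x}_f$ and ${\bf x}_g$ belong to $M_G$; (iii) at least one of ${\bf x}_f$ and ${\bf x}_g$ belongs to $M_G$.
   Context: A stable set of $G$ is a subset of $[d]$ with no edge of $G$ (including $\emptyset$ and singletons); $S(G)$ is the set of stable sets; $R[G]=\mathbb{K}[x_S : S\in S(G)]$ over a field $\mathbb{K}$. For ${\bf a}\in\mathbb{Z}_{\ge0}^d$, $G_{\bf a}$ is obtained from $G$ by replacing each vertex $i$ by a clique $G^{(i)}$ on $a_i$ vertices and joining all vertices of $G^{(i)}$ and $G^{(j)}$ when $\{i,j\}\in E(G)$; for a $k$-coloring $f$ of $G_{\bf a}$, ${\bf x}_f=\prod_{\ell=1}^k x_{S_\ell}$ with $S_\ell=\{j : G^{(j)}\cap f^{-1}(\ell)\neq\emptyset\}$ (every monomial of degree $k$ in $R[G]$ arises this way). $I_G$ is the kernel of $\pi:R[G]\to\mathbb{K}[t_1,\dots,t_d,s]$, $\pi(x_S)=s\prod_{j\in S}t_j$. $M_G=\langle x_Sx_T : S,T\in S(G),\ S\cap T\neq\emptyset\rangle$. *)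

(* Defs.v *)
From HB Require Import structures.
From mathcomp Require Import all_boot all_algebra.
From mathcomp Require Import mpoly.
Set Implicit Arguments.
Unset Strict Implicit.
Unset Printing Implicit Defensive.
Import GRing.Theory.
Local Open Scope ring_scope.

(* A finite simple graph G on [d] = 'I_d is an edge relation e : rel 'I_d
   (symmetric, irreflexive; these are hypotheses of the theorem). *)

Definition stableb (d : nat) (e : rel 'I_d) (S : {set 'I_d}) : bool :=
  [forall i in S, forall j in S, ~~ e i j].

Definition stable_sets (d : nat) (e : rel 'I_d) : {set {set 'I_d}} :=
  [set S | stableb e S].

Definition nS (d : nat) (e : rel 'I_d) : nat := #|stable_sets e|.

(* The stable set indexing the i-th variable of R[G]:
   variable 'X_i of {mpoly K[nS e]} is x_{stS e i}. *)
Definition stS (d : nat) (e : rel 'I_d) (i : 'I_(nS e)) : {set 'I_d} :=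
  @enum_val _ (mem (stable_sets e)) i.

Notation RG K e := {mpoly K[nS e]}.

(* pi : R[G] -> K[t_1,...,t_d,s], x_S |-> s * prod_{j in S} t_j.
   In {mpoly K[d.+1]}, t_j is 'X_(widen j) and s is 'X_(ord_max). *)
Definition piG (K : fieldType) (d : nat) (e : rel 'I_d) (p : RG K e)
  : {mpoly K[d.+1]} :=
  comp_mpoly
    [tuple 'X_(@ord_max d) * \prod_(j in stS i) 'X_(widen_ord (leqnSn d) j)
     | i < nS e] p.

Definition in_IG (K : fieldType) (d : nat) (e : rel 'I_d) (p : RG K e) : Prop :=
  piG p = 0.

Definition in_ideal (R : comRingType) (n : nat) (gens : seq {mpoly R[n]})
  (p : {mpoly R[n]}) : Prop :=
  exists c : seq {mpoly R[n]}, p = \sum_(i < size gens) c`_i * gens`_i.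

Definition MG_gens (K : fieldType) (d : nat) (e : rel 'I_d) : seq (RG K e) :=
  [seq 'X_p.1 * 'X_p.2
  | p <- enum [pred p : 'I_(nS e) * 'I_(nS e) | stS p.1 :&: stS p.2 != set0]].

Definition in_MG (K : fieldType) (d : nat) (e : rel 'I_d) (p : RG K e) : Prop :=
  in_ideal (MG_gens K e) p.

(* Vertices of G_a: vertex (i, r), r < a_i, is the r-th vertex of the clique G^(i). *)
Definition Ga_vert (d : nat) (a : 'I_d -> nat) : finType := {i : 'I_d & 'I_(a i)}.

Definition Ga_adj (d : nat) (e : rel 'I_d) (a : 'I_d -> nat) (u v : Ga_vert a) : bool :=
  (u != v) && ((tag u == tag v) || e (tag u) (tag v)).

Definition is_coloring (d : nat) (e : rel 'I_d) (a : 'I_d -> nat) (k : nat)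
  (f : {ffun Ga_vert a -> 'I_k}) : bool :=
  [forall u, forall v, Ga_adj e u v ==> (f u != f v)].

Definition color_class (d : nat) (a : 'I_d -> nat) (k : nat)
  (f : {ffun Ga_vert a -> 'I_k}) (l : 'I_k) : {set 'I_d} :=
  [set j : 'I_d | [exists r : 'I_(a j), f (Tagged (fun i => 'I_(a i)) r) == l]].

(* x_f = prod_{l=1}^k x_{S_l}: the exponent of x_S is #{l | S_l = S}. *)
Definition xf (K : fieldType) (d : nat) (e : rel 'I_d) (a : 'I_d -> nat) (k : nat)
  (f : {ffun Ga_vert a -> 'I_k}) : RG K e :=
  \prod_(i < nS e) 'X_i ^+ #|[set l : 'I_k | color_class f l == stS i]|.

(* Main.v *)
Require Import Defs.
From HB Require Import structures.
From mathcomp Require Import all_boot all_algebra.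
From mathcomp Require Import mpoly.
Import GRing.Theory.
Local Open Scope ring_scope.
Set Implicit Arguments.
Unset Strict Implicit.

Section S.
Variables (K : fieldType) (d : nat) (e : rel 'I_d).
Local Notation n := (nS e).

Definition mfE (a : 'I_d -> nat) (k : nat) (f : {ffun Ga_vert a -> 'I_k}) : 'X_{1..n} :=
  [multinom #|[set l : 'I_k | color_class f l == stS i]| | i < n].

Lemma xfE a k (f : {ffun Ga_vert a -> 'I_k}) : xf K e f = 'X_[mfE f].
Proof. by rewrite /xf mpolyXE_id; apply: eq_bigr => i _; rewrite mnmE. Qed.

Lemma Xinj (m1 m2 : 'X_{1..n}) : 'X_[m1] = 'X_[m2] :> {mpoly K[n]} -> m1 = m2.
Proof.
move=> h; have := congr1 (mcoeff m1) h; rewrite !mcoeffX eqxx.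
by case: eqP => // _ /eqP; rewrite oner_eq0.
Qed.

Lemma XinjD (m1 m2 : 'X_{1..d.+1}) : 'X_[m1] = 'X_[m2] :> {mpoly K[d.+1]} -> m1 = m2.
Proof.
move=> h; have := congr1 (mcoeff m1) h; rewrite !mcoeffX eqxx.
by case: eqP => // _ /eqP; rewrite oner_eq0.
Qed.

Definition mu (m : 'X_{1..n}) : 'X_{1..d.+1} :=
  (\sum_(i < n) (U_(@ord_max d) + \sum_(j in stS i) U_(widen_ord (leqnSn d) j)) *+ m i)%MM.

Lemma piX m : piG ('X_[m] : {mpoly K[n]}) = 'X_[mu m].
Proof.
rewrite /piG comp_mpolyX /mu -mprodXnE; apply: eq_bigr => i _.
by rewrite tnth_mktuple mpolyXD -mprodXE.
Qed.

Lemma muE m j : mu m (widen_ord (leqnSn d) j) = (\sum_(i < n) (j \in stS i) * m i)%N.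
Proof.
rewrite mnm_sumE; apply: eq_bigr => i _; rewrite mulmnE mnmDE mnm_sumE mnm1E.
have -> : (@ord_max d == widen_ord (leqnSn d) j) = false.
  by apply/negbTE; rewrite -val_eqE /= neq_ltn ltn_ord orbT.
rewrite add0n; congr (_ * _)%N.
have eqw : forall j', (widen_ord (leqnSn d) j' == widen_ord (leqnSn d) j) = (j' == j).
  by move=> j'; rewrite -val_eqE.
case: (boolP (j \in stS i)) => hj.
  rewrite (bigD1 j) //= mnm1E eqw eqxx big1 // => j' /andP[_ hj'].
  by rewrite mnm1E eqw (negbTE hj').
by rewrite big1 // => j' hj'; rewrite mnm1E eqw; case: eqP hj' => // ->; rewrite (negbTE hj).
Qed.


Definition Pm (m : 'X_{1..n}) : Prop :=
  exists i1 i2 : 'I_n, (stS i1 :&: stS i2 != set0) && (U_(i1) + U_(i2) <= m)%MM.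

Definition Qm (m : 'X_{1..n}) : Prop :=
  exists j : 'I_d, (2 <= mu m (widen_ord (leqnSn d) j))%N.

Lemma PQ m : Pm m <-> Qm m.
Proof.
split.
  move=> [i1 [i2 /andP[/set0Pn[j hj] /mnm_lepP hle]]]; exists j; rewrite muE.
  move: hj; rewrite inE => /andP[h1 h2].
  have [e21 | ne] := eqVneq i2 i1.
    by rewrite e21 in hle; have := hle i1; rewrite mnmDE mnm1E eqxx /= => h; rewrite (bigD1 i1) //= h1 mul1n (leq_trans h) // leq_addr.
  have := hle i1; have := hle i2; rewrite !mnmDE !mnm1E !eqxx.
  rewrite (negbTE ne) [i1 == i2]eq_sym (negbTE ne) /= => hm2 hm1.
  rewrite (bigD1 i1) //= (bigD1 i2) //=.
  rewrite h1 h2 !mul1n addnA (leq_trans _ (leq_addr _ _)) //.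
  by rewrite -[2%N]/(1 + 1)%N leq_add.
move=> [j]; rewrite muE => hs.
have hex : forall P : pred 'I_n, (0 < \sum_(i < n | P i) (j \in stS i) * m i)%N ->
    exists i, [&& P i, j \in stS i & (0 < m i)%N].
  move=> P hP; case: (pickP (fun i => [&& P i, j \in stS i & (0 < m i)%N])) => [i hi|h0].
    by exists i.
  move: hP; rewrite big1 // => i Pi; have := h0 i; rewrite Pi /=.
  case: (j \in stS i) => //=; rewrite mul1n lt0n; by case: eqP.
have [i1 /and3P[_ h1 p1]] := hex xpredT (ltnW hs).
have hint : forall i : 'I_n, j \in stS i -> stS i1 :&: stS i != set0.
  by move=> i hi; apply/set0Pn; exists j; rewrite inE h1 hi.
case: (leqP 2 (m i1)) => hm1.
  exists i1, i1; rewrite hint //=; apply/mnm_lepP => i; rewrite mnmDE mnm1E.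
  by case: eqP => [<-|]//=.
move: hs; rewrite (bigD1 i1) //= h1 mul1n.
have m1 : m i1 = 1%N by apply/eqP; rewrite eqn_leq p1 -ltnS hm1.
rewrite m1 => hs; have [i2 /and3P[ne h2 p2]] := hex (fun i => i != i1) hs.
exists i1, i2; rewrite hint //=; apply/mnm_lepP => i; rewrite mnmDE !mnm1E.
case: (eqVneq i1 i) => [<-|_]; first by rewrite (negbTE ne) m1.
by case: eqP => [<-|].
Qed.

Local Notation gens := (MG_gens K e).

Lemma gens_mem i : (i < size gens)%N -> exists i1 i2 : 'I_n,
  (stS i1 :&: stS i2 != set0) /\ gens`_i = 'X_[U_(i1) + U_(i2)].
Proof.
move=> hi; have /mapP[[i1 i2] hp ->] := mem_nth 0 hi.
by exists i1, i2; move: hp; rewrite mem_enum /= => hp; rewrite mpolyXD.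
Qed.

Lemma ideal_supp (p : {mpoly K[n]}) u : in_MG p -> p@_u != 0 -> Pm u.
Proof.
move=> [c ->]; rewrite raddf_sum /=.
case: (pickP (fun i : 'I_(size gens) => (c`_i * gens`_i)@_u != 0)) => [i hi _|h0]; last first.
  by rewrite big1 ?eqxx // => i _; have := h0 i; move/negbFE/eqP.
have [i1 [i2 [hint hg]]] := gens_mem (ltn_ord i).
move: hi; rewrite hg -mcoeff_msupp (perm_mem (msuppMX _ _)) => /mapP[m' _ ->].
by exists i1, i2; rewrite hint lem_addr.
Qed.

Lemma ideal_mon u : Pm u -> in_MG ('X_[u] : {mpoly K[n]}).
Proof.
move=> [i1 [i2 /andP[hint hle]]].
set g := (U_(i1) + U_(i2))%MM.
have hg : 'X_[g] \in gens.
  rewrite /g mpolyXD; apply/mapP; exists (i1, i2) => //.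
  by rewrite mem_enum.
have hidx : (index 'X_[g] gens < size gens)%N by rewrite index_mem.
exists (mkseq (fun k => if k == index 'X_[g] gens then 'X_[u - g] else 0) (size gens)).
rewrite (bigD1 (Ordinal hidx)) //= big1 ?addr0.
  by rewrite nth_mkseq // eqxx nth_index // -mpolyXD submK.
move=> i /eqP hne; rewrite nth_mkseq //.
by case: eqP => [h|]; [case: hne; apply: val_inj | rewrite mul0r].
Qed.

Lemma ideal_sub (p q : {mpoly K[n]}) : in_MG p -> in_MG q -> in_MG (p - q).
Proof.
move=> [c1 ->] [c2 ->]; exists (mkseq (fun k => c1`_k - c2`_k) (size gens)).
rewrite -sumrB; apply: eq_bigr => i _; by rewrite nth_mkseq // mulrBl.
Qed.
End S.

Unset Implicit Arguments.
Theorem lemma6p3 (K : fieldType) (d : nat) (e : rel 'I_d)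
  (e_sym : ssrbool.symmetric e) (e_irr : irreflexive e)
  (a : 'I_d -> nat) (k : nat) (f : {ffun Ga_vert a -> 'I_k})
  (b : 'I_d -> nat) (k' : nat) (g : {ffun Ga_vert b -> 'I_k'})
  (hf : is_coloring e f) (hg : is_coloring e g)
  (hne : xf K e f != xf K e g)
  (hI : in_IG (xf K e f - xf K e g)) :
  (in_MG (xf K e f - xf K e g) <-> in_MG (xf K e f) /\ in_MG (xf K e g)) /\
  (in_MG (xf K e f) /\ in_MG (xf K e g) <-> in_MG (xf K e f) \/ in_MG (xf K e g)).
Proof.
rewrite !xfE in hne hI *.
set mf := mfE e f in hne hI *; set mg := mfE e g in hne hI *.
have hmu : mu mf = mu mg.
  apply: (XinjD (K := K)); rewrite -!piX; apply/eqP; rewrite -subr_eq0.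
  by rewrite /piG -comp_mpolyB; apply/eqP; exact: hI.
have hne' : mf != mg by apply: contra hne => /eqP ->.
have Mm : forall m, in_MG ('X_[m] : {mpoly K[nS e]}) <-> Pm m.
  move=> m; split; last exact: ideal_mon.
  by move=> h; apply: (ideal_supp h); rewrite mcoeffX eqxx oner_eq0.
have PfPg : Pm mf <-> Pm mg by rewrite !PQ /Qm hmu.
rewrite !Mm; split; last by tauto.
split; last by move=> [h1 h2]; apply: ideal_sub; apply/Mm.
move=> h; have h1 : Pm mf.
  apply: (ideal_supp h); rewrite mcoeffB !mcoeffX eqxx.
  have -> : (mg == mf) = false by apply/negbTE; rewrite eq_sym.
  rewrite subr0.
  exact: oner_neq0.
by split; [|apply/PfPg].
Qed.
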